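(* Let $G$ be a finite abelian group which is either cyclic or a direct product of two cyclic groups. Then every normalized $3$-cocycle on $G$ (with values in $\mathbbm{k}^*$) is abelian.
   Context: $\mathbbm{k}$ is algebraically closed of characteristic zero. For a normalized 3-cocycle $\Phi$ on $G$ and $g\in G$, $\widetilde{\Phi}_g(x,y)=\frac{\Phi(g,x,y)\Phi(x,y,g)}{\Phi(x,g,y)}$. The category ${}^{\mathbbm{k}G}_{\mathbbm{k}G}\mathcal{YD}^{\Phi}$ has objects the $G$-graded vector spaces $V=\bigoplus_gV_g$ with operators $e\triangleright-$ ($e\in G$) preserving each $V_g$, $1\triangleright v=v$, and $e\triangleright(f\triangleright v)=\widetilde{\Phi}_g(e,f)(ef)\triangleright v$ for $v\in V_g$; morphisms are graded maps commuting with the actions. $\Phi$ is called abelian if every simple object of ${}^{\mathbbm{k}G}_{\mathbbm{k}G}\mathcal{YD}^{\Phi}$ is $1$-dimensional. *)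

(* Defs.v *)
From HB Require Import structures.
From mathcomp Require Import all_boot all_order all_algebra all_fingroup all_solvable.
Unset Implicit Arguments. Unset Strict Implicit. Unset Printing Implicit Defensive.
Import GRing.Theory.
Local Open Scope ring_scope.

Section YD.
Variables (k : fieldType) (gT : finGroupType).

Definition normalized_3cocycle (Phi : gT -> gT -> gT -> k) : Prop :=
  [/\ (forall e f g, Phi e f g != 0),
      (forall e f g h,
         Phi (e * f)%g g h * Phi e f (g * h)%g
         = Phi e f g * Phi e (f * g)%g h * Phi f g h)
    & (forall e f, [/\ Phi 1%g e f = 1, Phi e 1%g f = 1 & Phi e f 1%g = 1])].

Definition tPhi (Phi : gT -> gT -> gT -> k) (g x y : gT) : k :=
  Phi g x y * Phi x y g / Phi x g y.

(* Objects of the category  kG-YD-kG^Phi : G-graded vector spaces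
   V = (+)_g V_g together with linear operators e |> - preserving each V_g *)
Record yd_obj (Phi : gT -> gT -> gT -> k) := YDObj {
  ydV : gT -> lmodType k;
  ydact : forall g : gT, gT -> ydV g -> ydV g;
  ydact_lin : forall g e (a : k) (u v : ydV g),
      ydact g e (a *: u + v) = a *: ydact g e u + ydact g e v;
  ydact1 : forall g (v : ydV g), ydact g 1%g v = v;
  ydactM : forall g e f (v : ydV g),
      ydact g e (ydact g f v) = tPhi Phi g e f *: ydact g (e * f)%g v
}.
Arguments ydV {Phi}.
Arguments ydact {Phi}.

Definition yd_subobj {Phi} (X : yd_obj Phi) (W : forall g, ydV X g -> Prop) : Prop :=
  forall g,
    [/\ W g 0,
        (forall (a : k) (u v : ydV X g), W g u -> W g v -> W g (a *: u + v))
      & (forall e (v : ydV X g), W g v -> W g (ydact X g e v))].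

Definition yd_nonzero {Phi} (X : yd_obj Phi) : Prop :=
  exists g (v : ydV X g), v != 0.

Definition yd_simple {Phi} (X : yd_obj Phi) : Prop :=
  yd_nonzero X /\
  forall W, yd_subobj X W ->
    (forall g v, W g v -> v = 0) \/ (forall g v, W g v).

Definition yd_one_dim {Phi} (X : yd_obj Phi) : Prop :=
  exists g (v : ydV X g),
    [/\ v != 0,
        (forall h (w : ydV X h), h != g -> w = 0)
      & (forall w : ydV X g, exists a : k, w = a *: v)].

Definition abelian_cocycle (Phi : gT -> gT -> gT -> k) : Prop :=
  forall X : yd_obj Phi, yd_simple X -> yd_one_dim X.

End YD.

Arguments normalized_3cocycle {k gT} Phi.
Arguments tPhi {k gT} Phi g x y.
Arguments abelian_cocycle {k gT} Phi.
Arguments yd_obj {k gT} Phi.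
Arguments yd_simple {k gT Phi} X.
Arguments yd_one_dim {k gT Phi} X.
Arguments yd_subobj {k gT Phi} X W.

(* Main.v *)
Require Import Defs.
From HB Require Import structures.
From mathcomp Require Import all_boot all_order all_algebra all_fingroup all_solvable.
From mathcomp Require Import ring.
Import GRing.Theory.
Local Open Scope ring_scope.

Section Coc.
Variables (k : fieldType) (gT : finGroupType).
Variable Phi : gT -> gT -> gT -> k.
Hypothesis hPhi : normalized_3cocycle Phi.
Hypothesis comm : forall x y : gT, (x * y = y * x)%g.

Let nz : forall e f g, Phi e f g != 0.
Proof. by case: hPhi. Qed.
Let coc : forall e f g h,
         Phi (e * f)%g g h * Phi e f (g * h)%g
         = Phi e f g * Phi e (f * g)%g h * Phi f g h.
Proof. by case: hPhi. Qed.

Lemma solve_by {Lt Rt A B : k} : B != 0 -> A = B -> Lt * B = Rt * A -> Lt = Rt.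
Proof. by move=> hB -> h; apply: (mulIf hB). Qed.

Local Notation t := (tPhi Phi).

Lemma t_nz g x y : t g x y != 0.
Proof. by rewrite /tPhi !(mulf_neq0, invr_eq0, nz). Qed.

Lemma L1 g x y z : t g x y * t g (x * y)%g z = t g y z * t g x (y * z)%g.
Proof.
have H1 := coc x y z g. have H2 := coc x y g z. have H3 := coc x g y z.
have H4 := coc g x y z.
rewrite [(z * g)%g]comm in H1.
rewrite [(y * g)%g]comm in H2.
rewrite [(x * g)%g]comm in H3 H4.
have HA := congr2 *%R (congr2 *%R (congr2 *%R H1 (esym H2)) H3) (esym H4).
apply: (solve_by _ HA); first by rewrite !mulf_neq0.
by rewrite /tPhi; field; rewrite ?nz.
Qed.

Lemma L2 g h x y : t g x y * t h x y * t x g h * t y g h = t (g * h)%g x y * t (x * y)%g g h.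
Proof.
have H1 := coc g h x y. have H2 := coc x y g h. have H3 := coc x g y h.
have H4 := coc g x y h. have H5 := coc x g h y. have H6 := coc g x h y.
rewrite [(y * g)%g]comm [(x * g)%g]comm [(y * h)%g]comm [(x * h)%g]comm in H1 H2 H3 H4 H5 H6.
have HA := congr2 *%R (congr2 *%R (congr2 *%R (congr2 *%R (congr2 *%R (esym H1) (esym H2)) H3) (esym H4)) (esym H5)) H6.
apply: (solve_by _ HA); first by rewrite !mulf_neq0.
by rewrite /tPhi; field; rewrite ?nz.
Qed.

Definition bb g x y := t g x y / t g y x.

Lemma bb_nz g x y : bb g x y != 0.
Proof. by rewrite /bb mulf_neq0 ?invr_eq0 ?t_nz. Qed.

Lemma L3 g x y z : bb g (x * y)%g z = bb g x z * bb g y z.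
Proof.
have H1 := L1 g x y z. have H2 := L1 g z x y. have H3 := L1 g x z y.
rewrite [(z * x)%g]comm [(z * y)%g]comm in H1 H2 H3.
have HA := congr2 *%R (congr2 *%R H1 H2) (esym H3).
apply: (solve_by _ HA); first by rewrite !mulf_neq0 ?invr_eq0 ?nz.
by rewrite /bb; field; rewrite ?t_nz.
Qed.

Lemma L4 g h x y : bb (g * h)%g x y = bb g x y * bb h x y.
Proof.
have H1 := L2 g h x y. have H2 := L2 g h y x.
rewrite [(y * x)%g]comm in H2.
have HA := congr2 *%R (esym H1) H2.
apply: (solve_by _ HA); first by rewrite !mulf_neq0 ?invr_eq0 ?nz.
by rewrite /bb; field; rewrite ?t_nz.
Qed.

Lemma binv g x y : bb g x y = (bb g y x)^-1.
Proof. by rewrite /bb invf_div. Qed.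

Lemma L5 g x y z : bb g x (y * z)%g = bb g x y * bb g x z.
Proof. by rewrite binv L3 invfM -!binv. Qed.

Lemma alt g x y : [\/ g = x, g = y | x = y] -> bb g x y = 1.
Proof.
have tgg u v : t u u v = Phi u v u /\ t u v u = Phi u v u.
  by rewrite /tPhi; split; field; rewrite ?nz.
case=> [<-|<-|<-]; rewrite /bb ?divff ?t_nz //.
  by case: (tgg g y) => -> ->; rewrite divff.
by case: (tgg g x) => -> ->; rewrite divff.
Qed.

Lemma mult_gen (a b : gT) (hgen : forall x, exists i j, x = (a ^+ i * b ^+ j)%g)
  (f : gT -> k) : (forall x y, f (x * y)%g = f x * f y) -> f a = 1 -> f b = 1 ->
  forall x, f x = 1.
Proof.
move=> fM fa fb.
have pw c : f c = 1 -> forall i, f (c ^+ i)%g = 1.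
  move=> fc.
  have S i : f (c ^+ i.+1)%g = 1.
    by elim: i => [|i IH]; rewrite ?expg1 // expgS fM fc IH mulr1.
  case=> [|i]; last exact: S.
  rewrite expg0 -(expg_order c); have := order_gt0 c.
  by case: #[c]%g => // m _; exact: S.
move=> x; case: (hgen x) => i [j ->].
by rewrite fM pw // pw // mulr1.
Qed.

Lemma bb1 (a b : gT) (hgen : forall x, exists i j, x = (a ^+ i * b ^+ j)%g) g x y :
  bb g x y = 1.
Proof.
pose P u := u = a \/ u = b.
have hab u v w : P u -> P v -> P w -> bb u v w = 1.
  by case=> ->; case=> ->; case=> ->; apply: alt; first [by constructor 1 | by constructor 2 | by constructor 3].
have s1 v w : P v -> P w -> forall u, bb u v w = 1.
  move=> hv hw; apply: (@mult_gen a b hgen (fun u => bb u v w)).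
  - by move=> *; rewrite L4.
  - by apply: hab => //; left.
  - by apply: hab => //; right.
have s2 u w : P w -> forall v, bb u v w = 1.
  move=> hw; apply: (@mult_gen a b hgen (fun v => bb u v w)).
  - by move=> *; rewrite L3.
  - by apply: s1 => //; left.
  - by apply: s1 => //; right.
apply: (@mult_gen a b hgen (fun w => bb g x w)).
- by move=> *; rewrite L5.
- by apply: s2; left.
- by apply: s2; right.
Qed.

Lemma tsym (a b : gT) (hgen : forall x, exists i j, x = (a ^+ i * b ^+ j)%g) g x y :
  t g x y = t g y x.
Proof.
by rewrite -[LHS](divfK (t_nz g y x)) -/(bb g x y) (bb1 _ _ hgen) mul1r.
Qed.
End Coc.
Section PolyOp.
Context {k : closedFieldType} {V : lmodType k} (T : V -> V).
Hypothesis Tlin : forall a u v, T (a *: u + v) = a *: T u + T v.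

Lemma T0 : T 0 = 0.
Proof.
have := Tlin 1 0 0; rewrite scaler0 addr0 scale1r => /(congr1 (fun z => z - T 0)).
by rewrite subrr addrK => h; rewrite -h.
Qed.

Lemma Tit i a u v : iter i T (a *: u + v) = a *: iter i T u + iter i T v.
Proof. by elim: i => [|i IH] //=; rewrite IH Tlin. Qed.

Lemma Tit0 i : iter i T 0 = 0.
Proof. by elim: i => [|i IH] //=; rewrite IH T0. Qed.

Definition ev (p : {poly k}) (v : V) := \sum_(i < size p) p`_i *: iter i T v.

Lemma evE (p : {poly k}) N (v : V) : (size p <= N)%N -> ev p v = \sum_(i < N) p`_i *: iter i T v.
Proof.
move=> hN; rewrite /ev (big_ord_widen N (fun i => p`_i *: iter i T v)) //.
rewrite big_mkcond; apply: eq_bigr => i _; case: ifP => // /negbT.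
by rewrite -leqNgt => h; rewrite nth_default // scale0r.
Qed.

Lemma evD p q v : ev (p + q) v = ev p v + ev q v.
Proof.
pose N := maxn (size p) (size q).
rewrite !(evE _ N) ?leq_maxl ?leq_maxr ?(leq_trans (size_polyD _ _)) //.
by rewrite -big_split; apply: eq_bigr => i _; rewrite coefD scalerDl.
Qed.

Lemma evZ c p v : ev (c *: p) v = c *: ev p v.
Proof.
rewrite !(evE _ (size p)) ?size_scale_leq // scaler_sumr.
by apply: eq_bigr => i _; rewrite coefZ scalerA.
Qed.

Lemma evN p v : ev (- p) v = - ev p v.
Proof. by rewrite -[- p]scaleN1r evZ scaleN1r. Qed.

Lemma evMX p v : ev (p * 'X) v = ev p (T v).
Proof.
rewrite (evE _ (size p).+1); last first.
  by rewrite (leq_trans (size_polyMleq _ _)) // size_polyX addn2.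
rewrite big_ord_recl coefMX /= scale0r add0r.
by apply: eq_bigr => i _; rewrite coefMX /= add0n -iterSr.
Qed.

Lemma evL p a u w : ev p (a *: u + w) = a *: ev p u + ev p w.
Proof.
rewrite /ev scaler_sumr -big_split; apply: eq_bigr => i _.
by rewrite Tit scalerDr !scalerA mulrC.
Qed.

Lemma ev_fact p r v : ev (p * ('X - r%:P)) v = ev p (T v - r *: v).
Proof.
rewrite mulrBr evD evN evMX mulrC mul_polyC evZ.
have -> : T v - r *: v = (- r) *: v + T v by rewrite scaleNr addrC.
by rewrite evL scaleNr addrC.
Qed.

Lemma evC c v : ev c%:P v = c *: v.
Proof.
by rewrite (evE _ 1) ?size_polyC_leq1 // big_ord1 coefC.
Qed.

Lemma evXn n v : ev 'X^n v = iter n T v.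
Proof.
rewrite (evE _ n.+1) ?size_polyXn // big_ord_recr /= big1 ?add0r.
  by rewrite coefXn eqxx scale1r.
by move=> i _; rewrite coefXn (ltn_eqF (ltn_ord i)) scale0r.
Qed.

Lemma ev_root (p : {poly k}) (w : V) : p != 0 -> w != 0 -> ev p w = 0 ->
  exists r (w' : V), w' != 0 /\ T w' = r *: w'.
Proof.
move: {2}(size p) (leqnn (size p)) => n.
elim: n p w => [|n IH] p w hs hp hw hev.
  by move: hp; rewrite -size_poly_eq0 -leqn0 hs.
case: (eqVneq (size p) 1) => [/eqP/size_poly1P [c hc hpc]|hs1].
  by move: hev; rewrite hpc evC => /eqP; rewrite scaler_eq0 (negbTE hc) (negbTE hw).
case/closed_rootP: hs1 => x /factor_theorem [q hq].
case: (eqVneq (T w - x *: w) 0) => [/eqP|hw'].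
  by rewrite subr_eq0 => /eqP hTw; exists x, w.
have hq0 : q != 0 by move: hp; rewrite hq; apply: contraNneq => ->; rewrite mul0r.
apply: (IH q (T w - x *: w)) => //; last by rewrite -ev_fact -hq.
move: hs; rewrite hq size_mul ?polyXsubC_eq0 // size_XsubC addn2 /=.
by [].
Qed.

End PolyOp.

Theorem proposition3p15 (k : closedFieldType) (gT : finGroupType)
  (hchar : [pchar k] =i pred0)
  (hG : cyclic [set: gT] \/
        exists H K : {group gT}, [/\ cyclic H, cyclic K & (H \x K)%g = [set: gT]])
  (Phi : gT -> gT -> gT -> k)
  (hPhi : normalized_3cocycle Phi) :
  abelian_cocycle Phi.
Proof.
have commP : abelian [set: gT] -> forall x y : gT, (x * y = y * x)%g.
  move=> ab x y; have := centsP ab x (in_setT x) y (in_setT y).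
  by [].
have [a [b [hgen comm]]] : exists a b : gT,
    (forall x, exists i j, x = (a ^+ i * b ^+ j)%g) /\ (forall x y : gT, (x * y = y * x)%g).
  case: hG => [cG | [H [K [cH cK hHK]]]].
    have ab := cyclic_abelian cG.
    case/cyclicP: cG => a ha.
    exists a, 1%g; split; last exact: commP.
    move=> x; have : x \in <[a]>%g by rewrite -ha inE.
    by case/cycleP => i ->; exists i, 0%N; rewrite expg0 mulg1.
  have ab : abelian [set: gT].
    have [_ hm hc _] := dprodP hHK.
    by rewrite -hm abelianM !cyclic_abelian.
  case/cyclicP: cH => a ha; case/cyclicP: cK => b hb.
  exists a, b; split; last exact: commP.
  move=> x.
  have [y [z [hy hz -> _]]] := mem_dprod hHK (in_setT x).
  by move: hy hz; rewrite ha hb => /cycleP [i ->] /cycleP [j ->]; exists i, j.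
have tsy := @tsym _ _ Phi hPhi comm a b hgen.
move=> X [[g0 [v0 hv0]] hsub].
have lin := @ydact_lin _ _ _ X. have a1 := @ydact1 _ _ _ X. have aM := @ydactM _ _ _ X.
have act0 g e : ydact _ _ _ X g e 0 = 0.
  have := lin g e 1 0 0; rewrite scaler0 addr0 scale1r.
  move=> /(congr1 (fun z => z - ydact _ _ _ X g e 0)).
  by rewrite subrr addrK => h; rewrite -h.
have actZ g e c (u : ydV _ _ _ X g) : ydact _ _ _ X g e (c *: u) = c *: ydact _ _ _ X g e u.
  by have := lin g e c u 0; rewrite !addr0 act0 addr0.
have commA g e f (v : ydV _ _ _ X g) :
    ydact _ _ _ X g e (ydact _ _ _ X g f v) = ydact _ _ _ X g f (ydact _ _ _ X g e v).
  by rewrite !aM tsy comm.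
have S1 : forall h (w : ydV _ _ _ X h), h != g0 -> w = 0.
  have := hsub (fun g v => g = g0 \/ v = 0).
  case.
  - move=> g; split.
    + by right.
    + move=> c u v [hg|hu]; first by left.
      case=> [hg|hv]; first by left.
      by right; rewrite hu hv scaler0 addr0.
    + by move=> e v [hg|hv]; [left|right; rewrite hv act0].
  - by move/(_ g0 v0 (or_introl erefl)) => h; rewrite h eqxx in hv0.
  - by move=> hall h w hh; case: (hall h w) => // eh; rewrite eh eqxx in hh.
have S2 e : exists mu, forall g (v : ydV _ _ _ X g), ydact _ _ _ X g e v = mu *: v.
  pose T := ydact _ _ _ X g0 e.
  have Tlin : forall c u v, T (c *: u + v) = c *: T u + T v := lin g0 e.
  have hit i : exists c, forall v, iter i T v = c *: ydact _ _ _ X g0 (e ^+ i)%g v.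
    elim: i => [|i [c hc]].
      by exists 1 => v; rewrite expg0 a1 scale1r.
    exists (c * tPhi Phi g0 e (e ^+ i)%g) => v.
    by rewrite iterS hc /T actZ aM scalerA expgS.
  have [c hc] := hit #[e]%g.
  have hp : ('X^#[e]%g - c%:P : {poly k}) != 0.
    by rewrite -size_poly_eq0 size_XnsubC ?order_gt0.
  have hev : ev T ('X^#[e]%g - c%:P) v0 = 0.
    by rewrite evD evN evXn evC hc expg_order a1 subrr.
  have [r [w [hw hTw]]] := ev_root T Tlin _ _ hp hv0 hev.
  exists r.
  have := hsub (fun g v => ydact _ _ _ X g e v = r *: v).
  case.
  - move=> g; split.
    + by rewrite act0 scaler0.
    + by move=> c' u v hu hv; rewrite lin hu hv scalerDr !scalerA mulrC.
    + by move=> f v hv; rewrite commA hv actZ.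
  - by move/(_ g0 w hTw) => h; rewrite h eqxx in hw.
  - by [].
pose cast g (E : g0 = g) : ydV _ _ _ X g := eq_rect g0 (fun h => (ydV _ _ _ X h : Type)) v0 g E.
have := hsub (fun g u => forall E : g0 = g, exists c, u = c *: cast g E).
case.
- move=> g; split.
  + by move=> E; exists 0; rewrite scale0r.
  + move=> c u v hu hv E; case: (hu E) => a' ->; case: (hv E) => b' ->.
    by exists (c * a' + b'); rewrite scalerDl scalerA.
  + move=> e v hv E; case: (hv E) => a' ->; case: (S2 e) => m hm.
    by exists (a' * m); rewrite actZ hm scalerA.
- move/(_ g0 v0) => h.
  have e0 : v0 = 0.
    by apply: h => E; exists 1; rewrite (eq_axiomK E) scale1r.
  by rewrite e0 eqxx in hv0.
- move=> hall; exists g0, v0; split => //.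
  + by move=> w; case: (hall g0 w erefl) => c ->; exists c.
Qed.
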